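(* Let $G$ be a graph and let $\mathcal{C}$ be a packing of $K_4(G)$ (i.e., a collection of pairwise vertex-disjoint vertex sets each inducing a complete graph on $4$ vertices in $G$), and write $V(\mathcal{C})$ for the union of the sets in $\mathcal{C}$. Let $\rho\ge 1$ and let $S$ be a $\rho$-approximation solution for \textsc{Bipartization} on $G-V(\mathcal{C})$, i.e., $S$ is an odd cycle transversal of $G-V(\mathcal{C})$ of size at most $\rho$ times the minimum size of an odd cycle transversal of $G-V(\mathcal{C})$. Then $S\cup V(\mathcal{C})$ is a $\max\{2,\rho\}$-approximation solution for \textsc{Bipartization} on $G$, i.e., it is an odd cycle transversal of $G$ of size at most $\max\{2,\rho\}$ times the minimum size of an odd cycle transversal of $G$.
   Context: An odd cycle transversal of a graph $G$ is a set $S\subseteq V(G)$ such that $G-S$ is bipartite. $K_4(G)$ denotes the family of vertex sets of copies of $K_4$ in $G$; a packing of a family of sets is a subfamily of pairwise disjoint sets. *)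

(* Defs.v *)
(* A simple graph G is a finite type T of vertices with an
   adjacency relation e : rel T (symmetric and irreflexive, assumed in the theorem). *)
From mathcomp Require Import all_boot all_order all_algebra.
Set Implicit Arguments. Unset Strict Implicit. Unset Printing Implicit Defensive.
Import Order.TTheory GRing.Theory Num.Theory.

Definition bipartite_on (T : finType) (e : rel T) (U : {set T}) : bool :=
  [exists c : {ffun T -> bool},
     [forall x in U, forall y in U, e x y ==> (c x != c y)]].

Definition oct_in (T : finType) (e : rel T) (U S : {set T}) : bool :=
  (S \subset U) && bipartite_on e (U :\: S).

(* Minimum size of an odd cycle transversal of G[U] (U itself is always one). *)
Definition oct_min (T : finType) (e : rel T) (U : {set T}) : nat :=
  \big[minn/#|T|]_(S : {set T} | oct_in e U S) #|S|.

Definition is_K4 (T : finType) (e : rel T) (A : {set T}) : Prop :=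
  #|A| = 4 /\ (forall x y, x \in A -> y \in A -> x != y -> e x y).

Definition K4_packing (T : finType) (e : rel T) (C : {set {set T}}) : Prop :=
  (forall A, A \in C -> is_K4 e A) /\
  (forall A B, A \in C -> B \in C -> A != B -> [disjoint A & B]).

(* Main.v *)
Require Import Defs.
From mathcomp Require Import all_boot all_order all_algebra.
From mathcomp Require Import zify lra.
Import Order.TTheory GRing.Theory Num.Theory.

Section Aux.
Variable T : finType.
Implicit Types (e : rel T).

Lemma bip_sub e (U V : {set T}) : U \subset V -> bipartite_on e V -> bipartite_on e U.
Proof.
move=> /subsetP sUV /existsP[c /forallP Hc]; apply/existsP; exists c.
apply/forallP=> x; apply/implyP=> xU; apply/forallP=> y; apply/implyP=> yU.
by have /implyP H := Hc x; move: (H (sUV _ xU)) => /forallP /(_ y) /implyP; apply; apply: sUV.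
Qed.

Lemma oct_min_le e U S : oct_in e U S -> oct_min e U <= #|S|.
Proof.
move=> H; have : S \in index_enum {set T} by rewrite mem_index_enum.
rewrite /oct_min unlock /=; elim: (index_enum _) => //= a s IH.
rewrite inE => /orP[/eqP <-|/IH le]; first by rewrite H geq_minl.
case: (oct_in e U a) => //=; exact: leq_trans (geq_minr _ _) le.
Qed.

Lemma oct_min_attained e :
  exists O, oct_in e [set: T] O /\ #|O| = oct_min e [set: T].
Proof.
rewrite /oct_min; apply: (big_ind (fun x => exists O, oct_in e [set: T] O /\ #|O| = x)).
- exists [set: T]; split; last by rewrite cardsT.
  rewrite /oct_in subxx /=; apply/existsP; exists [ffun=> true].
  by apply/forallP=> x; rewrite setDv inE.
- move=> x y [O1 [H1 E1]] [O2 [H2 E2]]; rewrite /minn; case: ifP => _.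
  + by exists O1. + by exists O2.
- by move=> O HO; exists O.
Qed.

Lemma card_inter_cover (D : {set T}) (P : {set {set T}}) :
  trivIset P -> #|D :&: cover P| = \sum_(A in P) #|D :&: A|.
Proof.
elim: {P}_.+1 {-2}P (ltnSn #|P|) => // n IH P ltP tP.
case: (set_0Vmem P) => [-> | [A AP]].
  by rewrite /cover !big_set0 setI0 cards0.
rewrite (bigD1 A AP) /=.
have sA : A \subset cover P by apply: bigcup_sup.
have EC : cover P = A :|: cover (P :\ A).
  rewrite (coverD1 tP AP); apply/setP=> x; rewrite !inE.
  by move: (subsetP sA x); case: (x \in A) => //= ->.
rewrite EC setIUr cardsU (_ : (D :&: A) :&: (D :&: cover (P :\ A)) = set0); last first.
  apply/setP=> x; rewrite (coverD1 tP AP) !inE.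
  by case: (x \in D); case: (x \in A); case: (x \in cover P).
rewrite cards0 subn0 IH; last first.
- exact: trivIsetD.
- by move: ltP; rewrite (cardsD1 A P) AP.
congr (_ + _); apply: eq_bigl => B; by rewrite in_setD1 andbC.
Qed.

Lemma K4_hit e (A O : {set T}) : is_K4 e A -> oct_in e [set: T] O -> 1 < #|O :&: A|.
Proof.
move=> [cA adj] /andP[_ /existsP[c /forallP Hc]].
rewrite ltnNge; apply/negP => le1.
have : 2 < #|A :\: O|.
  by move: (cardsID O A); rewrite setIC cA => E; lia.
case/card_gt2P => x [y [z [[xi yi zi] [xy yz zx]]]].
have col u v : u \in A :\: O -> v \in A :\: O -> u != v -> c u != c v.
  move=> /setDP[uA uO] /setDP[vA vO] uv.
  move/implyP: (Hc u); rewrite !inE uO => /(_ isT) /forallP /(_ v) /implyP.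
  rewrite !inE vO => /(_ isT) /implyP; apply; exact: adj.
move: (col _ _ xi yi xy) (col _ _ yi zi yz) (col _ _ zi xi zx).
by case: (c x); case: (c y); case: (c z).
Qed.
End Aux.

Local Open Scope ring_scope.

Theorem lemma4 (R : realFieldType) (T : finType) (e : rel T)
  (e_sym : symmetric e) (e_irr : irreflexive e)
  (C : {set {set T}}) (hC : K4_packing e C)
  (rho : R) (hrho : 1 <= rho) (S : {set T})
  (hS : oct_in e (~: cover C) S)
  (hSrho : (#|S|%:R : R) <= rho * (oct_min e (~: cover C))%:R) :
  oct_in e [set: T] (S :|: cover C) /\
  (#|S :|: cover C|%:R : R) <= Num.max 2 rho * (oct_min e [set: T])%:R.
Proof.
split.
  rewrite /oct_in subsetT /=.
  have -> : [set: T] :\: (S :|: cover C) = (~: cover C) :\: S.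
    by apply/setP=> x; rewrite !inE; case: (x \in S); case: (x \in cover C).
  by case/andP: hS.
have [O [hO EO]] := @oct_min_attained T e; rewrite -EO.
have ha : (oct_min e (~: cover C) <= #|O :\: cover C|)%N.
  apply: oct_min_le; apply/andP; split.
    by apply/subsetP => x; rewrite !inE => /andP[].
  case/andP: hO => _; apply: bip_sub; apply/subsetP => x; rewrite !inE.
  by case: (x \in O); case: (x \in cover C).
have tC : trivIset C by apply/trivIsetP => A B AC BC; exact: hC.2.
have hcov : #|cover C| = (#|C| * 4)%N.
  rewrite -(eqP tC) -sum_nat_const; apply: eq_bigr => A AC.
  by case: (hC.1 A AC).
have hb : (#|C| * 2 <= #|O :&: cover C|)%N.
  rewrite (@card_inter_cover T) // -sum_nat_const; apply: leq_sum => A AC.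
  exact: (@K4_hit T e A O (hC.1 A AC) hO).
have hOab := cardsID (cover C) O.
have hU : (#|S :|: cover C| <= #|S| + #|cover C|)%N by rewrite cardsU leq_subr.
set a := #|O :\: cover C| in ha hOab.
set b := #|O :&: cover C| in hb hOab.
rewrite -hOab.
have r1 : (#|S :|: cover C|%:R : R) <= #|S|%:R + (2 * b)%:R.
  rewrite -natrD ler_nat; lia.
have r2 : (#|S|%:R : R) <= rho * a%:R.
  apply: le_trans hSrho _; apply: ler_wpM2l; first by apply: le_trans hrho.
  by rewrite ler_nat.
have h1 : rho * a%:R <= Num.max 2 rho * a%:R.
  by apply: ler_wpM2r => //; rewrite le_max lexx orbT.
have h2 : 2 * b%:R <= Num.max 2 rho * b%:R :> R.
  by apply: ler_wpM2r => //; rewrite le_max lexx.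
rewrite natrD mulrDr; rewrite natrM in r1.
lra.
Qed.
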